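(* Let $m$ be an odd integer and $a\in\mathbb{F}_{2^{3m}}^*$. The (APN) map $f:\mathbb{F}_{2^{3m}}\to\mathbb{F}_{2^{3m}}$ given by \[f(x)=x^3+a^{-1}\mathrm{Tr}_{2^{3m}/2^3}(a^3x^9+a^6x^{18})\] satisfies $M_1(f)=2^{3m-1}$ and $M_4(f)=2^{3m-3}$ (and $M_r(f)=0$ otherwise); in particular $|\mathrm{Im}(f)|=5\cdot 2^{3m-3}$.
   Context: $\mathrm{Tr}_{2^{3m}/2^3}(x)=\sum_{j=0}^{m-1}x^{8^j}$ is the trace map from $\mathbb{F}_{2^{3m}}$ onto $\mathbb{F}_8$. $M_r(f)$ is the number of $y\in\mathbb{F}_{2^{3m}}$ with exactly $r$ preimages under $f$. *)

(* Defs.v *)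
From HB Require Import structures.
From mathcomp Require Import all_boot all_order all_algebra all_field.
Set Implicit Arguments. Unset Strict Implicit. Unset Printing Implicit Defensive.
Import GRing.Theory.
Local Open Scope ring_scope.

Definition trace8 (F : finFieldType) (m : nat) (x : F) : F :=
  \sum_(j < m) x ^+ (8 ^ j)%N.

Definition Mr (F : finFieldType) (f : F -> F) (r : nat) : nat :=
  #|[set y : F | #|[set x : F | f x == y]| == r]|.

Definition fmap (F : finFieldType) (m : nat) (a : F) (x : F) : F :=
  x ^+ 3 + a^-1 * trace8 m (a ^+ 3 * x ^+ 9 + a ^+ 6 * x ^+ 18).

(* Main.v *)
Require Import Defs.
From HB Require Import structures.
From mathcomp Require Import all_boot all_order all_algebra all_field.
From mathcomp Require Import ring zify.
Set Implicit Arguments. Unset Strict Implicit. Unset Printing Implicit Defensive.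
Import GRing.Theory.
Local Open Scope ring_scope.

Lemma sqrD2 (F : finFieldType) (ch : 2 \in [pchar F]) (x y : F) :
  (x + y) ^+ 2 = x ^+ 2 + y ^+ 2.
Proof. by rewrite sqrrD mulr2n addrr_pchar2 // addr0. Qed.

Lemma powD2 (F : finFieldType) (ch : 2 \in [pchar F]) k (x y : F) :
  (x + y) ^+ (2 ^ k) = x ^+ (2 ^ k) + y ^+ (2 ^ k).
Proof.
elim: k => [|k IH]; first by rewrite !expr1.
by rewrite expnSr !exprM IH sqrD2.
Qed.

Lemma pow8D (F : finFieldType) (ch : 2 \in [pchar F]) j (x y : F) :
  (x + y) ^+ (8 ^ j) = x ^+ (8 ^ j) + y ^+ (8 ^ j).
Proof. by rewrite -[8%N]/(2 ^ 3)%N -expnM powD2. Qed.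

Lemma pow8_sum (F : finFieldType) (ch : 2 \in [pchar F]) j m (f : 'I_m -> F) :
  (\sum_(i < m) f i) ^+ (8 ^ j) = \sum_(i < m) f i ^+ (8 ^ j).
Proof.
elim: m f => [|m IH] f; first by rewrite !big_ord0 expr0n expn_eq0.
by rewrite !big_ord_recr /= pow8D //; congr (_ + _); apply: IH.
Qed.

Lemma sq_sum (F : finFieldType) (ch : 2 \in [pchar F]) m (f : 'I_m -> F) :
  (\sum_(i < m) f i) ^+ 2 = \sum_(i < m) f i ^+ 2.
Proof.
elim: m f => [|m IH] f; first by rewrite !big_ord0 expr0n.
by rewrite !big_ord_recr /= sqrD2 //; congr (_ + _); apply: IH.
Qed.

Definition Kp (F : finFieldType) (c : F) := c ^+ 8 == c.

Lemma K_pow8 (F : finFieldType) (c : F) j : Kp c -> c ^+ (8 ^ j) = c.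
Proof.
move/eqP=> Kc; elim: j => [|j IH]; first by rewrite expr1.
by rewrite expnSr exprM IH Kc.
Qed.

Lemma K_add (F : finFieldType) (ch : 2 \in [pchar F]) (x y : F) : Kp x -> Kp y -> Kp (x + y).
Proof. by move=> /eqP Kx /eqP Ky; rewrite /Kp -[8%N]/(2 ^ 3)%N powD2 // Kx Ky. Qed.

Lemma K_mul (F : finFieldType) (x y : F) : Kp x -> Kp y -> Kp (x * y).
Proof. by move=> /eqP Kx /eqP Ky; rewrite /Kp exprMn Kx Ky. Qed.

Lemma K_inv (F : finFieldType) (x : F) : Kp x -> Kp (x^-1).
Proof. by move=> /eqP Kx; rewrite /Kp exprVn Kx. Qed.

Lemma K_exp (F : finFieldType) (x : F) n : Kp x -> Kp (x ^+ n).
Proof. by move=> /eqP Kx; rewrite /Kp exprAC Kx. Qed.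

Lemma T_add (F : finFieldType) (ch : 2 \in [pchar F]) m (x y : F) :
  trace8 m (x + y) = trace8 m x + trace8 m y.
Proof. by rewrite /trace8 -big_split; apply: eq_bigr => j _; rewrite pow8D. Qed.

Lemma T_K (F : finFieldType) m (c x : F) : Kp c -> trace8 m (c * x) = c * trace8 m x.
Proof. by move=> Kc; rewrite /trace8 mulr_sumr; apply: eq_bigr => j _; rewrite exprMn (@K_pow8 _ c j Kc). Qed.

Lemma T_Kc (F : finFieldType) (ch : 2 \in [pchar F]) m (c : F) : odd m -> Kp c -> trace8 m c = c.
Proof.
move=> om Kc; rewrite /trace8 (eq_bigr (fun _ => c)) => [|j _]; last by rewrite K_pow8.
have [k ->] : exists k, m = (k.*2).+1.
  by exists m./2; rewrite -[m in LHS]odd_double_half om.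
by rewrite sumr_const card_ord mulrS -mul2n mulrnA mulr2n addrr_pchar2 // mul0rn addr0.
Qed.

Lemma T_sq (F : finFieldType) (ch : 2 \in [pchar F]) m (x : F) :
  trace8 m (x ^+ 2) = trace8 m x ^+ 2.
Proof. by rewrite /trace8 sq_sum //; apply: eq_bigr => j _; rewrite exprAC. Qed.

Lemma T_inK (F : finFieldType) (ch : 2 \in [pchar F]) m (x : F) :
  #|F| = (8 ^ m)%N -> Kp (trace8 m x).
Proof.
move=> cF; apply/eqP; rewrite /trace8.
have := pow8_sum ch 1 (fun j : 'I_m => x ^+ (8 ^ j)); rewrite expn1 => ->.
have E : forall j : 'I_m, x ^+ (8 ^ j) ^+ 8 = x ^+ (8 ^ j.+1).
  by move=> j; rewrite -exprM expnSr.
rewrite (eq_bigr _ (fun j _ => E j)).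
have H1 := @big_ord_recl F 0 +%R m (fun i : 'I_m.+1 => x ^+ (8 ^ i)).
have H2 := @big_ord_recr F 0 +%R m (fun i : 'I_m.+1 => x ^+ (8 ^ i)).
move: (etrans (esym H1) H2) => /=; rewrite -cF expf_card expn0 expr1 addrC.
by move/addrI.
Qed.

Definition hh (F : finFieldType) m (u : F) := trace8 m (u ^+ 3 + u ^+ 6).
Definition gg (F : finFieldType) m (u : F) := u + hh m u.
Definition QQ (F : finFieldType) (t c : F) :=
  c + (c * t ^+ 2 + c ^+ 2 * t + c ^+ 3 + c ^+ 2 * t ^+ 4 + c ^+ 4 * t ^+ 2 + c ^+ 6).

Lemma g_shift (F : finFieldType) (ch : 2 \in [pchar F]) m (u c : F) :
  odd m -> Kp c -> gg m (u + c) = gg m u + QQ (trace8 m u) c.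
Proof.
move=> om Kc.
have Kn : forall n, Kp (c ^+ n) by move=> n; apply: K_exp.
have E3 : (u + c) ^+ 3 = u ^+ 3 + c * u ^+ 2 + c ^+ 2 * u + c ^+ 3.
  by rewrite exprS sqrD2 //; ring.
have E6 : (u + c) ^+ 6 = u ^+ 6 + c ^+ 2 * (u ^+ 2) ^+ 2 + c ^+ 4 * u ^+ 2 + c ^+ 6.
  by rewrite -[6%N]/(3 * 2)%N exprM E3 !sqrD2 //; ring.
rewrite /gg /hh E3 E6.
have -> : u ^+ 3 + c * u ^+ 2 + c ^+ 2 * u + c ^+ 3 +
   (u ^+ 6 + c ^+ 2 * (u ^+ 2) ^+ 2 + c ^+ 4 * u ^+ 2 + c ^+ 6) =
   (u ^+ 3 + u ^+ 6) + c * u ^+ 2 + c ^+ 2 * u + c ^+ 3 + c ^+ 2 * (u ^+ 2) ^+ 2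
   + c ^+ 4 * u ^+ 2 + c ^+ 6 by ring.
rewrite !T_add // (@T_K _ m c (u ^+ 2) Kc) (@T_K _ m (c ^+ 2) u (Kn 2%N)).
rewrite (@T_K _ m (c ^+ 2) ((u ^+ 2) ^+ 2) (Kn 2%N)) (@T_K _ m (c ^+ 4) (u ^+ 2) (Kn 4%N)).
rewrite (T_Kc ch om (Kn 3%N)) (T_Kc ch om (Kn 6%N)) !T_sq //.
rewrite /QQ; ring.
Qed.

Lemma fiber_g (F : finFieldType) (ch : 2 \in [pchar F]) m (u : F) :
  #|F| = (8 ^ m)%N -> odd m ->
  #|[set u' | gg m u' == gg m u]| = #|[set c | Kp c && (QQ (trace8 m u) c == 0)]|.
Proof.
move=> cF om.
rewrite -[RHS](card_imset _ (addrI u)). apply: eq_card => u'; rewrite inE.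
apply/eqP/imsetP.
- move=> Eg; exists (u' - u); last by rewrite addrC subrK.
  have D : u' - u = hh m u - hh m u'.
    by rewrite -[u' in LHS](addrK (hh m u')); move: Eg; rewrite /gg => ->; ring.
  have Kd : Kp (u' - u) by rewrite D GRing.subr_pchar2 // K_add // T_inK.
  rewrite inE Kd /=; apply/eqP; apply: (@addrI _ (gg m u)).
  by rewrite -g_shift // addr0 [u + _]addrC subrK.
- by move=> [c]; rewrite inE => /andP[Kc /eqP Q0] ->; rewrite g_shift // Q0 addr0.
Qed.

Lemma card_preim_inj (T : finType) (f : T -> T) (P : pred T) :
  injective f -> #|[set x | P (f x)]| = #|[set y | P y]|.
Proof.
move=> inj; rewrite -(card_imset _ inj); apply: eq_card => y.
have [g fK gK] := injF_bij inj.
rewrite inE; apply/imsetP/idP => [[x] | Py]; first by rewrite inE => Px ->.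
by exists (g y); rewrite ?inE gK.
Qed.

Definition ZZ (F : finFieldType) (t : F) := #|[set c | Kp c && (QQ t c == 0)]|.

Lemma fmap_g (F : finFieldType) m (a x : F) : a != 0 ->
  fmap m a x = a^-1 * gg m (a * x ^+ 3).
Proof.
move=> a0; rewrite /fmap /gg /hh mulrDr mulKf //.
by congr (_ + _ * trace8 m _); ring.
Qed.

Lemma cube_inj (F : finFieldType) m : #|F| = (8 ^ m)%N -> odd m ->
  injective (fun x : F => x ^+ 3).
Proof.
move=> cF om.
have q0 : (0 < #|F|)%N by rewrite cF expn_gt0.
have key : forall x : F, x ^+ (2 * #|F|).-1 = x.
  move=> x; have -> : ((2 * #|F|).-1 = #|F| + (#|F|).-1)%N by lia.
  by rewrite exprD expf_card -exprS prednK // expf_card.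
have [k hk] : exists k, (3 * k = (2 * #|F|).-1)%N.
  have Em : m = ((m./2).*2).+1 by rewrite -[m in LHS]odd_double_half om.
  have E64 : (64 ^ (m./2) = 64 ^ (m./2) %/ 3 * 3 + 1)%N.
    by rewrite {1}(divn_eq (64 ^ (m./2)) 3) -modnXm; have -> : (64 %% 3 = 1)%N by []; rewrite exp1n.
  have E8 : (8 ^ m = 8 * 64 ^ (m./2))%N.
    by rewrite {1}Em expnS -mul2n expnM.
  move: E64 E8; rewrite cF; set p := (64 ^ _)%N; set d := (p %/ 3)%N => E64 E8.
  by exists (16 * d + 5)%N; rewrite E8; lia.
move=> x y /= Exy; by rewrite -(key x) -(key y) -hk !exprM Exy.
Qed.

Lemma fiber_fmap (F : finFieldType) (ch : 2 \in [pchar F]) m (a x : F) :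
  #|F| = (8 ^ m)%N -> odd m -> a != 0 ->
  #|[set x' | fmap m a x' == fmap m a x]| = ZZ (trace8 m (a * x ^+ 3)).
Proof.
move=> cF om a0.
have inj : injective (fun x : F => a * x ^+ 3).
  by move=> y z /(mulfI a0) /(cube_inj cF om).
rewrite /ZZ -fiber_g // -(card_preim_inj (fun y => gg m y == gg m (a * x ^+ 3)) inj).
apply: eq_card => y; rewrite !inE !fmap_g //.
by apply/eqP/eqP => [/(mulfI (invr_neq0 a0))|->].
Qed.

Definition B := (bool * bool * bool)%type.
Definition addB (x y : B) : B := let: (a0,a1,a2) := x in let: (b0,b1,b2) := y in
  (addb a0 b0, addb a1 b1, addb a2 b2).
Definition mulB (x y : B) : B := let: (a0,a1,a2) := x in let: (b0,b1,b2) := y in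
  let c0 := a0 && b0 in let c1 := addb (a0 && b1) (a1 && b0) in
  let c2 := addb (addb (a0 && b2) (a1 && b1)) (a2 && b0) in
  let c3 := addb (a1 && b2) (a2 && b1) in let c4 := a2 && b2 in
  (addb c0 c3, addb (addb c1 c3) c4, addb c2 c4).
Definition oneB : B := (true, false, false).
Definition zeroB : B := (false, false, false).
Definition powB (x : B) n := iter n (mulB x) oneB.
Definition QB (t c : B) : B :=
  addB c (addB (addB (addB (addB (addB (mulB c (powB t 2)) (mulB (powB c 2) t)) (powB c 3))
    (mulB (powB c 2) (powB t 4))) (mulB (powB c 4) (powB t 2))) (powB c 6)).
Definition allB : seq B := [:: (false,false,false); (true,false,false); (false,true,false);
  (true,true,false); (false,false,true); (true,false,true); (false,true,true); (true,true,true)].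
Definition ZB (t : B) := count (fun c => QB t c == zeroB) allB.

Lemma allB_uniq : uniq allB. Proof. by []. Qed.
Lemma allB_all x : x \in allB. Proof. by case: x => [[[] []] []]. Qed.
Lemma ZB_map : map ZB allB = [:: 1; 4; 1; 4; 1; 4; 1; 4]%N. Proof. by vm_compute. Qed.
Lemma ZB14 b : (ZB b == 1%N) || (ZB b == 4%N).
Proof. by case: b => [[[] []] []]; vm_compute. Qed.
Lemma powB_inv b : b != zeroB -> mulB b (powB b 6) = oneB.
Proof. by case: b => [[[] []] []]. Qed.
Lemma powB8 b : powB b 8 = b.
Proof. by case: b => [[[] []] []]. Qed.
Lemma addB_eq0 x y : addB x y = zeroB -> x = y.
Proof. by case: x => [[[] []] []]; case: y => [[[] []] []]. Qed.

Lemma card_count (T : finType) (s : seq T) (P : pred T) :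
  uniq s -> (forall x, x \in s) -> #|[set x | P x]| = count P s.
Proof.
move=> us alls; rewrite -size_filter; have /card_uniqP <- := filter_uniq P us.
by apply: eq_card => x; rewrite inE mem_filter alls andbT.
Qed.

Definition eB (F : finFieldType) (w : F) (b : B) : F :=
  let: (b0, b1, b2) := b in (b0 : nat)%:R + (b1 : nat)%:R * w + (b2 : nat)%:R * w ^+ 2.

Lemma natb_add (F : finFieldType) (ch : 2 \in [pchar F]) (a b : bool) :
  ((addb a b : nat)%:R : F) = (a : nat)%:R + (b : nat)%:R.
Proof. by case: a; case: b; rewrite /= ?addr0 ?add0r // addrr_pchar2. Qed.

Lemma natb_mul (F : finFieldType) (a b : bool) :
  ((a && b : nat)%:R : F) = (a : nat)%:R * (b : nat)%:R.
Proof. by case: a; case: b; rewrite /= ?mulr0 ?mul0r ?mulr1. Qed.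

Lemma e_add (F : finFieldType) (ch : 2 \in [pchar F]) (w : F) x y :
  eB w (addB x y) = eB w x + eB w y.
Proof.
case: x => [[x0 x1] x2]; case: y => [[y0 y1] y2]; rewrite /= !natb_add //; ring.
Qed.

Lemma e_mul (F : finFieldType) (ch : 2 \in [pchar F]) (w : F) x y :
  w ^+ 3 = w + 1 -> eB w (mulB x y) = eB w x * eB w y.
Proof.
move=> w3; case: x => [[x0 x1] x2]; case: y => [[y0 y1] y2]; rewrite /= !natb_add // !natb_mul.
apply/eqP; rewrite eq_sym -subr_eq0; apply/eqP.
transitivity (((x1 : nat)%:R * (y2 : nat)%:R + (x2 : nat)%:R * (y1 : nat)%:R
   + (x2 : nat)%:R * (y2 : nat)%:R * w) * (w ^+ 3 - (w + 1)) : F); first by ring.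
by rewrite w3 subrr mulr0.
Qed.

Lemma e_one (F : finFieldType) (w : F) : eB w oneB = 1.
Proof. by rewrite /= !mul0r !addr0. Qed.

Lemma e_zero (F : finFieldType) (w : F) : eB w zeroB = 0.
Proof. by rewrite /= !mul0r !addr0. Qed.

Lemma e_pow (F : finFieldType) (ch : 2 \in [pchar F]) (w : F) x n :
  w ^+ 3 = w + 1 -> eB w (powB x n) = eB w x ^+ n.
Proof.
move=> w3; elim: n => [|n IH]; first by rewrite e_one expr0.
by rewrite /powB iterS -/(powB x n) e_mul // IH exprS.
Qed.

Lemma e_inj (F : finFieldType) (ch : 2 \in [pchar F]) (w : F) :
  w ^+ 3 = w + 1 -> injective (eB w).
Proof.
move=> w3 x y E.
have E0 : eB w (addB x y) = 0 by rewrite e_add // E addrr_pchar2.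
have [/eqP d0|d0] := boolP (addB x y == zeroB); first exact: addB_eq0.
have := e_one w; rewrite -(powB_inv d0) e_mul // E0 mul0r => /esym /eqP.
by rewrite oner_eq0.
Qed.

Lemma eK (F : finFieldType) (ch : 2 \in [pchar F]) (w : F) x :
  w ^+ 3 = w + 1 -> Kp (eB w x).
Proof. by move=> w3; rewrite /Kp -e_pow // powB8. Qed.

Lemma K_card (F : finFieldType) : (#|[set c : F | Kp c]| <= 8)%N.
Proof.
pose p : {poly F} := 'X^8 - 'X.
have sp : size p = 9%N by rewrite /p size_polyDl ?size_polyXn // size_opp size_polyX.
have p0 : p != 0 by rewrite -size_poly_eq0 sp.
have := max_poly_roots p0 _ (enum_uniq (mem [set c : F | Kp c])).
rewrite sp -cardE ltnS; apply; apply/allP => c; rewrite mem_enum inE /root /p.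
by rewrite !hornerE subr_eq0.
Qed.

Lemma K_image (F : finFieldType) (ch : 2 \in [pchar F]) (w : F) :
  w ^+ 3 = w + 1 -> [set c : F | Kp c] = [set eB w b | b : B].
Proof.
move=> w3; apply/esym/eqP; rewrite eqEcard; apply/andP; split.
  by apply/subsetP => c /imsetP[b _ ->]; rewrite inE eK.
rewrite card_imset; last exact: e_inj.
by apply: leq_trans (K_card F) _; rewrite /B !card_prod card_bool.
Qed.
From mathcomp Require Import all_fingroup all_solvable.

Lemma exists_w (F : finFieldType) (ch : 2 \in [pchar F]) m :
  #|F| = (8 ^ m)%N -> exists w : F, w ^+ 3 = w + 1.
Proof.
move=> cF.
have H7 : (7 %| #|[set: {unit F}]|)%N.
  rewrite card_finField_unit cF.
  have E : (8 ^ m = 8 ^ m %/ 7 * 7 + 1)%N.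
    by rewrite {1}(divn_eq (8 ^ m) 7) -modnXm; have -> : (8 %% 7 = 1)%N by []; rewrite exp1n.
  by rewrite E addn1 /= dvdn_mull.
have [x _ ox] := Cauchy (isT : prime 7) H7.
pose z : F := val x.
have z7 : z ^+ 7 = 1.
  by rewrite /z -FinRing.val_unitX -ox expg_order.
have z1 : z != 1.
  apply/eqP => z1; have x1 : x = 1%g by apply: val_inj; rewrite /= -/z z1.
  by move: ox; rewrite x1 order1.
have P0 : (z - 1) * ((z ^+ 3 + z + 1) * (z ^+ 3 + z ^+ 2 + 1)) = 0.
  transitivity (z ^+ 7 - 1 + 2%:R * (z ^+ 4 - z ^+ 3)); first by ring.
  by rewrite z7 subrr add0r (pcharf0 ch) mul0r.
move/eqP: P0; rewrite !mulf_eq0 subr_eq0 (negbTE z1) /= => /orP[] /eqP H.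
- exists z; apply/eqP; rewrite -subr_eq0 GRing.subr_pchar2 //; apply/eqP; rewrite -H; ring.
- exists (z ^+ 3).
  have -> : (z ^+ 3) ^+ 3 = z ^+ 7 * z ^+ 2 by rewrite -exprM -exprD.
  rewrite z7 mul1r; apply/eqP; rewrite eq_sym -subr_eq0 GRing.subr_pchar2 //; apply/eqP.
  by rewrite -H; ring.
Qed.

Lemma T_nz (F : finFieldType) m : #|F| = (8 ^ m)%N -> (0 < m)%N ->
  exists u : F, trace8 m u != 0.
Proof.
move=> cF m0.
have [u Tu|T0] := pickP (fun u : F => trace8 m u != 0); first by exists u.
exfalso.
pose p : {poly F} := \sum_(j < m) 'X^(8 ^ j).
have hp : forall u, p.[u] = trace8 m u.
  by move=> u; rewrite /p horner_sum; apply: eq_bigr => j _; rewrite hornerXn.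
have p1 : p`_1 = 1.
  rewrite /p coef_sum; case: m m0 {cF T0 hp p} => // m' _.
  rewrite big_ord_recl /= coefXn expn0 eqxx big1 ?addr0 // => j _.
  rewrite coefXn /=; case: eqP => // E.
  have : (8 <= 8 ^ (bump 0 j))%N by rewrite /bump /= add1n expnS leq_pmulr ?expn_gt0.
  by rewrite -E.
have p0 : p != 0 by apply/eqP => p0; move: p1; rewrite p0 coef0 => /eqP; rewrite eq_sym oner_eq0.
have := max_poly_roots p0 _ (enum_uniq (mem (@predT F))).
rewrite -cardE.
have -> : (all (root p) (enum (mem predT))).
  by apply/allP => u _; rewrite /root hp; move: (T0 u) => /= /negbFE.
move=> /(_ isT) lt.
have sz : (size p <= (8 ^ m.-1).+1)%N.
  apply: leq_trans (size_sum _ _ _) _; apply/bigmax_leqP => j _.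
  by rewrite size_polyXn ltnS leq_exp2l // -ltnS prednK.
have : (#|F| < (8 ^ m.-1).+1)%N by apply: leq_trans lt sz.
by rewrite cF -(prednK m0) expnS ltnS leqNgt ltn_Pmull ?expn_gt0.
Qed.

Lemma T_fiber (F : finFieldType) (ch : 2 \in [pchar F]) m (t : F) :
  #|F| = (8 ^ m)%N -> (0 < m)%N -> Kp t ->
  #|[set u : F | trace8 m u == t]| = #|[set u : F | trace8 m u == 0]|.
Proof.
move=> cF m0 Kt.
have [u0 Tu0] := T_nz cF m0.
pose ut := (t / trace8 m u0) * u0.
have Tut : trace8 m ut = t.
  rewrite /ut T_K ?mulfVK //; apply: K_mul Kt _; apply: K_inv; exact: T_inK.
rewrite -[RHS](card_imset _ (addrI ut)); apply: eq_card => u; rewrite inE.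
apply/eqP/imsetP => [Tu | [v]].
  exists (u - ut); last by rewrite addrC subrK.
  by rewrite inE GRing.subr_pchar2 // T_add // Tu Tut addrr_pchar2.
by rewrite inE => /eqP Tv ->; rewrite T_add // Tut Tv addr0.
Qed.

Lemma count_T (F : finFieldType) (ch : 2 \in [pchar F]) m (P : pred F) :
  #|F| = (8 ^ m)%N -> (0 < m)%N ->
  #|[set u : F | P (trace8 m u)]| =
    (#|[set t : F | Kp t && P t]| * #|[set u : F | trace8 m u == 0%R]|)%N.
Proof.
move=> cF m0.
rewrite -sum1_card (partition_big (trace8 m) (fun t => Kp t && P t)) /=; last first.
  by move=> u; rewrite inE => Pu; rewrite Pu T_inK.
rewrite -sum_nat_const; apply: eq_big => [t|t /andP[Kt Pt]]; first by rewrite inE.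
rewrite -(@T_fiber F ch m t cF m0 Kt) -sum1_card; apply: eq_bigl => u.
by rewrite !inE; case: eqP => [->|]; rewrite ?Pt ?andbF.
Qed.

Lemma count_K (F : finFieldType) (ch : 2 \in [pchar F]) (w : F) (P : pred F) :
  w ^+ 3 = w + 1 ->
  #|[set t : F | Kp t && P t]| = #|[set b : B | P (eB w b)]|.
Proof.
move=> w3; rewrite -(card_imset _ (e_inj ch w3)); apply: eq_card => t.
rewrite inE; apply/andP/imsetP => [[Kt Pt] | [b]].
  have : t \in [set c : F | Kp c] by rewrite inE.
  rewrite (K_image ch w3) => /imsetP[b _ tE]; exists b => //; rewrite inE -tE.
  exact: Pt.
by rewrite inE => Pb ->; rewrite eK.
Qed.

Lemma ZZ_e (F : finFieldType) (ch : 2 \in [pchar F]) (w : F) b :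
  w ^+ 3 = w + 1 -> ZZ (eB w b) = ZB b.
Proof.
move=> w3; rewrite /ZZ (count_K ch (fun c => QQ (eB w b) c == 0) w3) /ZB.
rewrite -(card_count _ allB_uniq allB_all); apply: eq_card => c; rewrite !inE.
have -> : QQ (eB w b) (eB w c) = eB w (QB b c).
  by rewrite /QB /QQ !(e_add, e_mul, e_pow).
by rewrite -(e_zero w) (inj_eq (e_inj ch w3)).
Qed.

Lemma Mr_fib (T : finFieldType) (f : T -> T) r :
  (Mr f r * r)%N = #|[set x | #|[set x' | f x' == f x]| == r]|.
Proof.
rewrite -sum1_card (partition_big f (fun y => #|[set x' | f x' == y]| == r)) /=; last first.
  by move=> x; rewrite inE.
rewrite /Mr -sum_nat_const; apply: eq_big => [y|y]; first by rewrite inE.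
rewrite inE => /eqP cy.
rewrite -[LHS]cy -[LHS]sum1_card; apply: eq_bigl => x; rewrite !inE.
by case: eqP => [->|]; rewrite ?cy ?eqxx ?andbF.
Qed.

Theorem proposition5p4 (F : finFieldType) (m : nat) (a : F) :
  #|F| = (2 ^ (3 * m))%N -> odd m -> a != 0 ->
  [/\ Mr (fmap m a) 1 = (2 ^ (3 * m - 1))%N,
      Mr (fmap m a) 4 = (2 ^ (3 * m - 3))%N,
      (forall r : nat, (0 < r)%N -> r != 1%N -> r != 4%N -> Mr (fmap m a) r = 0%N)
    & #|[set fmap m a x | x : F]| = (5 * 2 ^ (3 * m - 3))%N].
Proof.
move=> cF om a0.
have cF8 : #|F| = (8 ^ m)%N by rewrite cF expnM.
have ch : 2 \in [pchar F] := card_finPcharP cF (isT : prime 2).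
have m0 : (0 < m)%N by case: m om {cF cF8}.
have [w w3] := exists_w ch cF8.
pose nK := #|[set u : F | trace8 m u == 0]|.
have inj : injective (fun x : F => a * x ^+ 3).
  by move=> y z /(mulfI a0) /(cube_inj cF8 om).
have key : forall r, (Mr (fmap m a) r * r = count (pred1 r) (map ZB allB) * nK)%N.
  move=> r; rewrite Mr_fib.
  transitivity #|[set x | ZZ (trace8 m (a * x ^+ 3)) == r]|.
    by apply: eq_card => x; rewrite !inE fiber_fmap.
  rewrite (card_preim_inj (fun u => ZZ (trace8 m u) == r) inj).
  rewrite (count_T ch (fun t => ZZ t == r) cF8 m0) (count_K ch (fun t => ZZ t == r) w3).
  congr (_ * _)%N; rewrite count_map -(card_count _ allB_uniq allB_all).
  by apply: eq_card => b; rewrite !inE ZZ_e.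
have nK8 : (#|F| = 8 * nK)%N.
  have := count_T ch (fun _ => true) cF8 m0; rewrite (count_K ch (fun _ => true) w3).
  have -> : #|[set u : F | true]| = #|F| by apply: eq_card => u; rewrite inE.
  have -> : #|[set b : B | true]| = 8%N.
    by rewrite (card_count _ allB_uniq allB_all).
  by [].
set e := (3 * m - 3)%N.
have He : (3 * m = e + 3)%N by rewrite /e; lia.
have He1 : (3 * m - 1 = e + 2)%N by rewrite /e; lia.
have nKE : nK = (2 ^ e)%N.
  apply/eqP; rewrite -(eqn_pmul2l (isT : (0 < 8)%N)) -nK8 cF He expnD mulnC.
  by [].
have fib14 : forall x, (#|[set x' | fmap m a x' == fmap m a x]| == 1%N) ||
                       (#|[set x' | fmap m a x' == fmap m a x]| == 4%N).
  move=> x; rewrite fiber_fmap //.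
  have : trace8 m (a * x ^+ 3) \in [set c : F | Kp c] by rewrite inE T_inK.
  by rewrite (K_image ch w3) => /imsetP[b _ ->]; rewrite ZZ_e // ZB14.
have M1 : Mr (fmap m a) 1 = (2 ^ (3 * m - 1))%N.
  by rewrite -[LHS]muln1 key ZB_map nKE He1 expnD mulnC.
have M4 : Mr (fmap m a) 4 = (2 ^ (3 * m - 3))%N.
  apply/eqP; rewrite -(eqn_pmul2r (isT : (0 < 4)%N)) key ZB_map nKE /= mulnC.
  by [].
split => //.
- move=> r r0 r1 r4; have := key r; rewrite ZB_map /=.
  have e1 : (1 == r)%N = false by rewrite eq_sym (negbTE r1).
  have e4 : (4 == r)%N = false by rewrite eq_sym (negbTE r4).
  by rewrite !e1 !e4 /= => /eqP; rewrite muln_eq0 (gtn_eqF r0) orbF => /eqP.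
- pose cnt y := #|[set x | fmap m a x == y]|.
  have memA : forall y, (y \in [set fmap m a x | x : F]) = (cnt y == 1%N) || (cnt y == 4%N).
    move=> y; apply/imsetP/idP => [[x _ ->]|H]; first exact: fib14.
    have : (0 < cnt y)%N by case/orP: H => /eqP ->.
    rewrite card_gt0 => /set0Pn[x]; rewrite inE => /eqP <-; by exists x.
  rewrite -(cardsID [set y | cnt y == 1%N] [set fmap m a x | x : F]).
  have -> : #|[set fmap m a x | x : F] :&: [set y | cnt y == 1%N]| = Mr (fmap m a) 1.
    by apply: eq_card => y; rewrite !inE memA -/(cnt y); case: (cnt y) => [|[|[|[|[|k]]]]].
  have -> : #|[set fmap m a x | x : F] :\: [set y | cnt y == 1%N]| = Mr (fmap m a) 4.
    by apply: eq_card => y; rewrite !inE memA -/(cnt y); case: (cnt y) => [|[|[|[|[|k]]]]].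
  rewrite M1 M4 He1 -/e expnD; have h4 : (2 ^ 2 = 4)%N by []. rewrite h4; lia.
Qed.
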